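(* Let $t\ge1$ be an integer, $\varepsilon\in(0,\frac12)$, and $q=\frac{88t}{\varepsilon}$ (assumed to be an integer). Suppose $f:\{0,1\}^d\to\{0,1\}$ is $\varepsilon$-far from linear, and let $x_1,\dots,x_q$ be sampled uniformly and independently from $\{0,1\}^d$. Let $Y$ be the number of pairs $(i,j)\in[q]^2$ with $i<j$ such that $f(x_i)+f(x_j)\neq f(x_i\oplus x_j)$ (mod 2). Then $\Pr\big[Y\le\frac\varepsilon4\binom q2\big]\le 0.25$.
   Context: $\oplus$ denotes bitwise XOR. $f:\{0,1\}^d\to\{0,1\}$ is linear if there is $S\subseteq[d]$ with $f(x)=\sum_{i\in S}x[i]\bmod 2$; $f$ is $\varepsilon$-far from linear if it differs from every linear function on at least an $\varepsilon$ fraction of $\{0,1\}^d$. *)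

(* Defs.v *)
From mathcomp Require Import all_boot all_order all_algebra.
Set Implicit Arguments. Unset Strict Implicit. Unset Printing Implicit Defensive.
Import Order.TTheory GRing.Theory Num.Theory.

Definition cube (d : nat) := {ffun 'I_d -> bool}.

Definition bxor (d : nat) (x y : cube d) : cube d := [ffun i => x i (+) y i].

Definition linfun (d : nat) (S : {set 'I_d}) (x : cube d) : bool :=
  \big[addb/false]_(i in S) x i.

Definition is_linear (d : nat) (f : cube d -> bool) : Prop :=
  exists S : {set 'I_d}, forall x, f x = linfun S x.

Local Open Scope ring_scope.

Definition frac_diff (R : numFieldType) (d : nat) (f g : cube d -> bool) : R :=
  #|[set x : cube d | f x != g x]|%:R / #|{: cube d}|%:R.

Definition far_from_linear (R : numFieldType) (eps : R) (d : nat)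
  (f : cube d -> bool) : Prop :=
  forall g : cube d -> bool, is_linear g -> eps <= frac_diff R f g.

Definition violations (d q : nat) (f : cube d -> bool) (xs : 'I_q -> cube d) : nat :=
  #|[set p : 'I_q * 'I_q | (p.1 < p.2)%N &&
      ((f (xs p.1) (+) f (xs p.2)) != f (bxor (xs p.1) (xs p.2)))]|.

(* probability, under x_1..x_q uniform and independent on {0,1}^d
   (i.e. uniform over {ffun 'I_q -> cube d}), of an event *)
Definition prob_samples (R : numFieldType) (d q : nat)
  (E : pred {ffun 'I_q -> cube d}) : R :=
  #|[set xs : {ffun 'I_q -> cube d} | E xs]|%:R / #|{: {ffun 'I_q -> cube d}}|%:R.

(* Main.v *)
Require Import Defs.
From mathcomp Require Import all_boot all_order all_algebra.
From mathcomp Require Import ring lra.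
Set Implicit Arguments. Unset Strict Implicit. Unset Printing Implicit Defensive.
Import Order.TTheory GRing.Theory Num.Theory.
Local Open Scope ring_scope.

Definition sgn (R : nzRingType) (b : bool) : R := if b then -1 else 1.

Lemma sgnD (R : nzRingType) a b : sgn R (a (+) b) = sgn R a * sgn R b.
Proof. by case: a; case: b; rewrite /sgn ?mulrN ?mulNr ?mulr1 ?opprK. Qed.

Lemma sgn_sq (R : nzRingType) a : sgn R a * sgn R a = 1.
Proof. by case: a; rewrite /sgn ?mulrNN mulr1. Qed.

Lemma linfun_xor d (S : {set 'I_d}) x y :
  Defs.linfun S (bxor x y) = Defs.linfun S x (+) Defs.linfun S y.
Proof.
rewrite /Defs.linfun -big_split; apply: eq_bigr => i _; by rewrite ffunE.
Qed.

Lemma sgn_linfun (R : nzRingType) d (S : {set 'I_d}) x :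
  sgn R (Defs.linfun S x) = \prod_(i in S) sgn R (x i).
Proof.
rewrite /Defs.linfun; apply: (big_morph (sgn R)) => //; exact: sgnD.
Qed.

Lemma sum_sets_prod (R : comNzRingType) d (a : 'I_d -> R) :
  \sum_(S : {set 'I_d}) \prod_(i in S) a i = \prod_(i < d) (1 + a i).
Proof.
have -> : \prod_(i < d) (1 + a i) = \prod_(i < d) \sum_(b : bool) (if b then a i else 1).
  by apply: eq_bigr => i _; rewrite big_bool /= addrC.
rewrite bigA_distr_bigA /=.
rewrite (reindex (fun g : {ffun 'I_d -> bool} => [set i | g i])) /=.
  apply: eq_bigr => g _; rewrite big_mkcond /=; apply: eq_bigr => i _.
  by rewrite inE.
exists (fun S : {set 'I_d} => [ffun i => i \in S]) => g _.
  by apply/ffunP => i; rewrite ffunE inE.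
by apply/setP => i; rewrite inE ffunE.
Qed.

Lemma sum_chi (R : comNzRingType) d (x y : cube d) :
  \sum_(S : {set 'I_d}) sgn R (Defs.linfun S x) * sgn R (Defs.linfun S y)
  = if x == y then (2 ^ d)%:R else 0.
Proof.
under eq_bigr => S _ do rewrite !sgn_linfun -big_split /=.
rewrite sum_sets_prod; case: eqP => [<-|/eqP nxy].
  under eq_bigr => i _ do rewrite sgn_sq.
  by rewrite prodr_const card_ord natrX.
have [i Hi] : exists i, x i != y i.
  apply/existsP; move: nxy; apply: contraR => /existsPn H.
  by apply/eqP/ffunP => i; have := H i; rewrite negbK => /eqP.
rewrite (bigD1 i) //=; move: Hi; case: (x i); case: (y i) => //= _;
  by rewrite /sgn ?mulrN ?mulNr mulr1 subrr mul0r.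
Qed.

Definition chi (R : nzRingType) d (S : {set 'I_d}) (x : cube d) : R :=
  sgn R (Defs.linfun S x).
Definition Fh (R : nzRingType) d (f : cube d -> bool) (S : {set 'I_d}) : R :=
  \sum_x sgn R (f x) * chi R S x.

Lemma card_cube d : #|{: cube d}| = (2 ^ d)%N.
Proof. by rewrite card_ffun card_bool card_ord. Qed.

Lemma inversion (R : comNzRingType) d (f : cube d -> bool) x :
  \sum_S Fh R f S * chi R S x = (2 ^ d)%:R * sgn R (f x).
Proof.
transitivity (\sum_y sgn R (f y) * \sum_S chi R S y * chi R S x).
  rewrite /Fh; under eq_bigr => S _ do rewrite mulr_suml.
  rewrite exchange_big /=; apply: eq_bigr => y _; rewrite mulr_sumr.
  by apply: eq_bigr => S _; rewrite mulrA.
have H y : \sum_S chi R S y * chi R S x = if y == x then (2 ^ d)%:R else 0.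
  exact: sum_chi.
under eq_bigr => y _ do rewrite H.
rewrite (bigD1 x) //= eqxx big1 ?addr0; first by rewrite mulrC.
by move=> y /negbTE ->; rewrite mulr0.
Qed.

Lemma triple (R : comNzRingType) d (f : cube d -> bool) :
  (2 ^ d)%:R * \sum_x \sum_y sgn R (f x) * sgn R (f y) * sgn R (f (bxor x y))
  = \sum_S Fh R f S ^+ 3.
Proof.
rewrite mulr_sumr.
transitivity (\sum_x \sum_y \sum_S
   Fh R f S * ((sgn R (f x) * chi R S x) * (sgn R (f y) * chi R S y))).
  apply: eq_bigr => x _; rewrite mulr_sumr; apply: eq_bigr => y _.
  rewrite [_ * (_ * sgn R (f (bxor x y)))]mulrCA -(inversion R f (bxor x y)).
  rewrite !mulr_sumr.
  apply: eq_bigr => S _; rewrite /chi linfun_xor sgnD; ring.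
rewrite exchange_big /=.
under eq_bigr => x _ do rewrite exchange_big /=.
rewrite exchange_big /=; apply: eq_bigr => S _.
rewrite exprS expr2; set c := Fh R f S; rewrite {2 3}/c /Fh big_distrlr /=.
rewrite mulr_sumr exchange_big /=; apply: eq_bigr => x _; rewrite mulr_sumr.
by apply: eq_bigr => y _; rewrite /c /Fh.
Qed.

Lemma parseval (R : comNzRingType) d (f : cube d -> bool) :
  \sum_S Fh R f S ^+ 2 = (2 ^ d)%:R * (2 ^ d)%:R.
Proof.
transitivity (\sum_S \sum_x Fh R f S * (sgn R (f x) * chi R S x)).
  by apply: eq_bigr => S _; rewrite expr2 {2}/Fh mulr_sumr.
rewrite exchange_big /=.
transitivity (\sum_(x : cube d) ((2 ^ d)%:R : R)).
  apply: eq_bigr => x _.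
  under eq_bigr => S _ do rewrite mulrCA.
  by rewrite -mulr_sumr inversion mulrCA sgn_sq mulr1.
by rewrite sumr_const card_cube mulr_natr natrX -natrX -mulr_natl.
Qed.

Lemma card_sumR (R : nzRingType) (T : finType) (P : pred T) :
  (#|[set x | P x]|%:R : R) = \sum_x (P x)%:R.
Proof.
rewrite -sum1_card natr_sum big_mkcond /=; apply: eq_bigr => x _.
by rewrite inE; case: (P x).
Qed.

Lemma sgn_nat (R : nzRingType) b : sgn R b = 1 - 2 * b%:R.
Proof. by case: b; rewrite /sgn /= ?mulr1 ?mulr0 ?subr0 //; rewrite opprD addrA subrr add0r. Qed.

Lemma Fh_le (R : realFieldType) d (f : cube d -> bool) (eps : R) S :
  far_from_linear eps f -> Fh R f S <= (2 ^ d)%:R - 2 * eps * (2 ^ d)%:R.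
Proof.
move=> /(_ (Defs.linfun S)) H.
have {}H : eps <= frac_diff R f (Defs.linfun S) by apply: H; exists S.
move: H; rewrite /frac_diff card_sumR card_cube => H.
have N0 : (0 : R) < (2 ^ d)%:R by rewrite ltr0n expn_gt0.
have Hs : Fh R f S = (2 ^ d)%:R - 2 * \sum_x ((f x != Defs.linfun S x))%:R.
  rewrite /Fh /chi.
  under eq_bigr => x _ do rewrite -sgnD sgn_nat.
  rewrite sumrB sumr_const card_cube -mulr_sumr; congr (_ - _ * _).
  by apply: eq_bigr => x _; case: (f x); case: (Defs.linfun S x).
rewrite Hs; move: H; rewrite ler_pdivlMr // => H.
rewrite lerD2l lerN2 -mulrA ler_pM2l //.
Qed.

Definition viol d (f : cube d -> bool) (x y : cube d) : bool :=
  (f x (+) f y) != f (bxor x y).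

Lemma BLR (R : realFieldType) d (f : cube d -> bool) (eps : R) :
  far_from_linear eps f ->
  eps * (2 ^ d)%:R * (2 ^ d)%:R <= \sum_x \sum_y (viol f x y)%:R.
Proof.
move=> Hf; set N : R := (2 ^ d)%:R.
have N0 : 0 < N by rewrite ltr0n expn_gt0.
set V := \sum_x \sum_y _.
have HT : \sum_x \sum_y sgn R (f x) * sgn R (f y) * sgn R (f (bxor x y))
   = N * N - 2 * V.
  have -> : N * N = \sum_(x : cube d) N.
    by rewrite sumr_const card_cube mulr_natr.
  rewrite /V mulr_sumr -sumrB.
  apply: eq_bigr => x _.
  have -> : N = \sum_(y : cube d) 1.
    by rewrite sumr_const card_cube.
  rewrite mulr_sumr -sumrB.
  apply: eq_bigr => y _; rewrite -!sgnD sgn_nat /viol.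
  by case: (f x); case: (f y); case: (f (bxor x y)).
have H3 := triple R f; rewrite HT in H3.
have : \sum_S Fh R f S ^+ 3 <= \sum_S Fh R f S ^+ 2 * (N - 2 * eps * N).
  apply: ler_sum => S _; rewrite exprS mulrC ler_wpM2l ?sqr_ge0 //.
  exact: Fh_le.
rewrite -mulr_suml parseval -H3 -/N => H.
have : N * N - 2 * V <= N * (N - 2 * eps * N).
  by rewrite -(ler_pM2l N0) mulrA.
nra.
Qed.



Lemma sum_sel (R : comNzRingType) (T : finType) q n (sel : 'I_n -> 'I_q)
  (w : 'I_n -> T) : injective sel ->
  \sum_(xs : {ffun 'I_q -> T}) \prod_(r < n) ((xs (sel r) == w r)%:R : R)
     * (#|T|%:R) ^+ n = (#|T|%:R) ^+ q.
Proof.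
move=> inj; set N : R := #|T|%:R.
have E (xs : {ffun 'I_q -> T}) : \prod_(r < n) ((xs (sel r) == w r)%:R : R)
   = \prod_(m < q) \prod_(r < n | sel r == m) ((xs m == w r)%:R : R).
  rewrite (partition_big sel xpredT) //=; apply: eq_bigr => m _.
  by apply: eq_bigr => r /eqP ->.
under eq_bigr do rewrite E.
rewrite -mulr_suml.
rewrite -(bigA_distr_bigA (fun (m : 'I_q) (c : T) => \prod_(r < n | sel r == m) ((c == w r)%:R : R))) /=.
have S (m : 'I_q) : \sum_(c : T) \prod_(r < n | sel r == m) ((c == w r)%:R : R)
   = if [exists r, sel r == m] then 1 else N.
  case: existsP => [[r /eqP <-]|H].
    have P1 c : \prod_(r0 < n | sel r0 == sel r) ((c == w r0)%:R : R)
        = (c == w r)%:R.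
      by rewrite (eq_bigl (pred1 r)) ?big_pred1_eq // => r'; rewrite /= inj_eq.
    under eq_bigr => c _ do rewrite P1.
    by rewrite (bigD1 (w r)) //= eqxx big1 ?addr0 // => c /negbTE ->.
  have P0 c : \prod_(r0 < n | sel r0 == m) ((c == w r0)%:R : R) = 1.
    by rewrite big_pred0 // => r; apply/negP => Hr; apply: H; exists r.
  under eq_bigr => c _ do rewrite P0.
  by rewrite sumr_const.
under eq_bigr do rewrite S.
have -> : \prod_(m < q) (if [exists r, sel r == m] then 1 else N)
   = \prod_(m < q | ~~ [exists r, sel r == m]) N.
  by rewrite [RHS]big_mkcond /=; apply: eq_bigr => m _; case: ifP.
rewrite prodr_const -exprD; congr (_ ^+ _).
have Hc : #|[pred m | [exists r, sel r == m]]| = n.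
  have -> : #|[pred m | [exists r, sel r == m]]| = #|[set sel r | r in 'I_n]|.
    apply: eq_card => m; rewrite inE; apply/existsP/imsetP.
      by move=> [r /eqP <-]; exists r.
    by move=> [r _ ->]; exists r.
  by rewrite card_imset // card_ord.
have := cardC [pred m | [exists r, sel r == m]].
rewrite card_ord Hc => Hq; apply: (etrans _ Hq); rewrite addnC; congr (_ + _)%N.
Qed.

Lemma sum_lin (R : comNzRingType) (T J : finType) q n (sel : 'I_n -> 'I_q)
  (c : J -> R) (w : J -> 'I_n -> T) : injective sel ->
  \sum_(xs : {ffun 'I_q -> T})
     (\sum_k c k * \prod_(r < n) ((xs (sel r) == w k r)%:R : R)) * (#|T|%:R) ^+ n
  = (#|T|%:R) ^+ q * \sum_k c k.
Proof.
move=> inj; under eq_bigr do rewrite mulr_suml.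
rewrite exchange_big mulr_sumr /=; apply: eq_bigr => k _.
under eq_bigr do rewrite -mulrA.
by rewrite -mulr_sumr (sum_sel R (w k) inj) mulrC.
Qed.

Lemma pick2 (R : comNzRingType) (T : finType) (g : T -> T -> R) a b :
  \sum_(p : T * T) g p.1 p.2 * ((a == p.1)%:R * (b == p.2)%:R) = g a b.
Proof.
rewrite (bigD1 (a, b)) //= !eqxx !mulr1 big1 ?addr0 // => [[a' b']] /= H.
case: (a =P a') H => [<-|_]; case: (b =P b') => [<-|_] //=.
  by rewrite eqxx.
  by rewrite mulr0 mulr0.
  by rewrite mul0r mulr0.
  by rewrite mul0r mulr0.
Qed.

Definition sel2 q (i j : 'I_q) (r : 'I_2) : 'I_q := if val r == 0%N then i else j.

Lemma sel2_inj q (i j : 'I_q) : i != j -> injective (sel2 i j).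
Proof.
move=> ij [[|[|r]] Hr] [[|[|r']] Hr'] //= H; try (by apply/val_inj);
  rewrite /sel2 /= in H; by rewrite H eqxx in ij.
Qed.

Lemma sum_two (R : comNzRingType) (T : finType) q (i j : 'I_q) (g : T -> T -> R) :
  i != j ->
  \sum_(xs : {ffun 'I_q -> T}) g (xs i) (xs j) * (#|T|%:R) ^+ 2
  = (#|T|%:R) ^+ q * \sum_a \sum_b g a b.
Proof.
move=> ij.
have E (xs : {ffun 'I_q -> T}) : g (xs i) (xs j) = \sum_(p : T * T) g p.1 p.2 *
   \prod_(r < 2) ((xs (sel2 i j r) == (if val r == 0%N then p.1 else p.2))%:R : R).
  rewrite -[LHS](pick2 g); apply: eq_bigr => p _.
  by rewrite !big_ord_recl big_ord0 mulr1.
under eq_bigr do rewrite E.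
rewrite (sum_lin (fun p : T * T => g p.1 p.2) (fun p (r : 'I_2) => if val r == 0%N then p.1 else p.2)); last exact: sel2_inj.
by rewrite pair_big.
Qed.

Definition sel4 q (i j k l : 'I_q) (r : 'I_4) : 'I_q :=
  if val r == 0%N then i else if val r == 1%N then j
  else if val r == 2%N then k else l.

Lemma sel4_inj q (i j k l : 'I_q) : i != j -> i != k -> i != l -> j != k ->
  j != l -> k != l -> injective (sel4 i j k l).
Proof.
move=> ij ik il jk jl kl r r'; apply: contra_eq => nr.
case: r r' nr => [[|[|[|[|r]]]] Hr] [[|[|[|[|r']]]] Hr'] //= _; rewrite /sel4 /=;
  by rewrite // eq_sym.
Qed.
Lemma sum_four (R : comNzRingType) (T : finType) q (i j k l : 'I_q)
  (g g' : T -> T -> R) :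
  i != j -> i != k -> i != l -> j != k -> j != l -> k != l ->
  \sum_(xs : {ffun 'I_q -> T}) g (xs i) (xs j) * g' (xs k) (xs l) * (#|T|%:R) ^+ 4
  = (#|T|%:R) ^+ q * ((\sum_a \sum_b g a b) * (\sum_a \sum_b g' a b)).
Proof.
move=> ij ik il jk jl kl.
pose w (K : (T * T) * (T * T)) (r : 'I_4) :=
  if val r == 0%N then K.1.1 else if val r == 1%N then K.1.2
  else if val r == 2%N then K.2.1 else K.2.2.
have E (xs : {ffun 'I_q -> T}) : g (xs i) (xs j) * g' (xs k) (xs l) =
   \sum_(K : (T * T) * (T * T)) g K.1.1 K.1.2 * g' K.2.1 K.2.2 *
   \prod_(r < 4) ((xs (sel4 i j k l r) == w K r)%:R : R).
  rewrite -(pick2 g) -(pick2 g') big_distrlr pair_big /=.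
  apply: eq_bigr => [[p1 p2]] _; rewrite !big_ord_recl big_ord0 /=.
  rewrite /sel4 /w /=; ring.
under eq_bigr do rewrite E.
rewrite (sum_lin (fun K : (T * T) * (T * T) => g K.1.1 K.1.2 * g' K.2.1 K.2.2) w);
  last exact: sel4_inj.
congr (_ * _).
rewrite [X in X * _]pair_big [X in _ * X]pair_big big_distrlr pair_big /=.
by [].
Qed.



Lemma count_lt q (j : 'I_q) : (\sum_(i < q) (i < j)%N)%N = j.
Proof.
transitivity (\sum_(i < q | true && (i < j)%N) 1)%N.
  by rewrite [RHS]big_mkcond; apply: eq_bigr => i _ /=; case: ltnP.
rewrite -(big_ord_widen_cond q xpredT (fun _ => 1%N) (ltnW (ltn_ord j))).
by rewrite sum1_card card_ord.
Qed.

Lemma card_pairs q : (\sum_(P : 'I_q * 'I_q | (P.1 < P.2)%N) 1)%N = 'C(q, 2).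
Proof.
rewrite big_mkcond /= -(pair_big xpredT xpredT (fun i j : 'I_q => if (i < j)%N then 1%N else 0%N)) /=.
rewrite exchange_big /=.
transitivity (\sum_(j < q) (j : nat))%N.
  apply: eq_bigr => j _; rewrite -[RHS]count_lt; apply: eq_bigr => i _.
  by case: ltnP.
by rewrite -(big_mkord xpredT (fun j => j)) bin2_sum.
Qed.

Lemma cnt1 (R : nzRingType) q (a : 'I_q) :
  \sum_(P : 'I_q * 'I_q) ((a == P.1)%:R : R) = q%:R.
Proof.
rewrite -(pair_big xpredT xpredT (fun u v : 'I_q => ((a == u)%:R : R))) /=.
rewrite (bigD1 a) //= [X in _ + X]big1 ?addr0.
  by under eq_bigr do rewrite eqxx; rewrite sumr_const card_ord.
by move=> u /negbTE; rewrite eq_sym => ->; rewrite big1.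
Qed.

Lemma cnt2 (R : nzRingType) q (a : 'I_q) :
  \sum_(P : 'I_q * 'I_q) ((a == P.2)%:R : R) = q%:R.
Proof.
rewrite -(pair_big xpredT xpredT (fun u v : 'I_q => ((a == v)%:R : R))) /=.
rewrite exchange_big /= (bigD1 a) //= [X in _ + X]big1 ?addr0.
  by under eq_bigr do rewrite eqxx; rewrite sumr_const card_ord.
by move=> u /negbTE; rewrite eq_sym => ->; rewrite big1.
Qed.

Definition zz (R : nzRingType) d q (f : cube d -> bool) (P : 'I_q * 'I_q)
  (xs : {ffun 'I_q -> cube d}) : R := (viol f (xs P.1) (xs P.2))%:R.
Definition YY (R : nzRingType) d q (f : cube d -> bool) (xs : {ffun 'I_q -> cube d}) : R :=
  \sum_(P : 'I_q * 'I_q | (P.1 < P.2)%N) zz R f P xs.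
Definition VV (R : nzRingType) d (f : cube d -> bool) : R :=
  \sum_(a : cube d) \sum_(b : cube d) (viol f a b)%:R.

Lemma viol_Y (R : nzRingType) d q (f : cube d -> bool) (xs : {ffun 'I_q -> cube d}) :
  (violations f xs)%:R = YY R f xs.
Proof.
rewrite /violations (@card_sumR R _ (fun p : 'I_q * 'I_q => (p.1 < p.2)%N && viol f (xs p.1) (xs p.2))).
rewrite /YY [RHS]big_mkcond; apply: eq_bigr => P _ /=.
by case: ltnP.
Qed.

Lemma sum_cond_const (R : nzRingType) q (K : R) :
  \sum_(P : 'I_q * 'I_q | (P.1 < P.2)%N) K = ('C(q, 2))%:R * K.
Proof.
by rewrite -card_pairs natr_sum mulr_suml; apply: eq_bigr => P _; rewrite mul1r.
Qed.

Lemma ltn_neq_ord q (i j : 'I_q) : (i < j)%N -> i != j.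
Proof. by move=> H; apply/eqP => E; rewrite E ltnn in H. Qed.

Lemma sumY (R : comNzRingType) d q (f : cube d -> bool) :
  \sum_(xs : {ffun 'I_q -> cube d}) YY R f xs * (#|cube d|%:R) ^+ 2
  = ('C(q, 2))%:R * ((#|cube d|%:R) ^+ q * VV R f).
Proof.
rewrite /YY; under eq_bigr do rewrite mulr_suml.
rewrite exchange_big /= -sum_cond_const; apply: eq_bigr => P HP.
by rewrite /zz (sum_two (fun a b => (viol f a b)%:R)) // ltn_neq_ord.
Qed.

Definition ov q (P P' : 'I_q * 'I_q) : bool :=
  ~~ [&& P.1 != P'.1, P.1 != P'.2, P.2 != P'.1 & P.2 != P'.2].

Lemma zz01 (R : numDomainType) d q (f : cube d -> bool) P (xs : {ffun 'I_q -> cube d}) :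
  0 <= zz R f P xs <= 1.
Proof. by rewrite /zz; case: viol; rewrite ?ler01 ?lexx. Qed.

Lemma VV_ge0 (R : numDomainType) d (f : cube d -> bool) : 0 <= VV R f.
Proof. by apply: sumr_ge0 => a _; apply: sumr_ge0 => b _; rewrite ler0n. Qed.

Lemma pair_bound (R : realFieldType) d q (f : cube d -> bool) (P P' : 'I_q * 'I_q) :
  (P.1 < P.2)%N -> (P'.1 < P'.2)%N ->
  \sum_(xs : {ffun 'I_q -> cube d}) zz R f P xs * zz R f P' xs * (#|cube d|%:R) ^+ 4
  <= (#|cube d|%:R) ^+ q * (VV R f * VV R f)
     + (ov P P')%:R * ((#|cube d|%:R) ^+ q * VV R f * (#|cube d|%:R) ^+ 2).
Proof.
move=> H1 H2; set N : R := #|cube d|%:R.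
have N0 : 0 <= N by rewrite ler0n.
case: (boolP (ov P P')) => H.
  rewrite mul1r.
  have h1 : \sum_(xs : {ffun 'I_q -> cube d}) zz R f P xs * zz R f P' xs * N ^+ 4
     <= \sum_(xs : {ffun 'I_q -> cube d}) zz R f P xs * N ^+ 2 * N ^+ 2.
    have e : N ^+ 2 * N ^+ 2 = N ^+ 4 by rewrite -exprD.
    apply: ler_sum => xs _; rewrite -[zz R f P xs * _ * N ^+ 2]mulrA e -mulrA.
    have /andP [a0 a1] := zz01 R f P xs; have /andP [b0 b1] := zz01 R f P' xs.
    rewrite ler_wpM2l //.
    by rewrite -[X in _ <= X]mul1r ler_wpM2r ?exprn_ge0.
  have h2 : \sum_(xs : {ffun 'I_q -> cube d}) zz R f P xs * N ^+ 2 * N ^+ 2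
     = N ^+ q * VV R f * N ^+ 2.
    by rewrite -mulr_suml /zz (sum_two (fun a b => (viol f a b)%:R)) // ltn_neq_ord.
  have h3 : 0 <= N ^+ q * (VV R f * VV R f).
    by rewrite mulr_ge0 ?exprn_ge0 ?mulr_ge0 ?VV_ge0.
  lra.
rewrite mul0r addr0.
move: H; rewrite /ov negbK => /and4P [n11 n12 n21 n22].
rewrite /zz (sum_four (fun a b => (viol f a b)%:R) (fun a b => (viol f a b)%:R)) //;
  by apply: ltn_neq_ord.
Qed.

Lemma ov_le (R : realFieldType) q (P : 'I_q * 'I_q) :
  \sum_(P' : 'I_q * 'I_q) ((ov P P')%:R : R) <= 4 * q%:R.
Proof.
have -> : 4 * q%:R = \sum_(P' : 'I_q * 'I_q) (((P.1 == P'.1)%:R + (P.1 == P'.2)%:R)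
   + ((P.2 == P'.1)%:R + (P.2 == P'.2)%:R) : R).
  by rewrite !big_split /= !cnt1 !cnt2; ring.
apply: ler_sum => P' _; rewrite /ov.
by case: eqP; case: eqP; case: eqP; case: eqP => //= *;
  rewrite ?ler0n ?addr0 ?add0r ?ler_eDr ?ler_eDl ?ler01 ?lerDl ?lerDr ?ler0n //; lra.
Qed.

Lemma sumY2 (R : realFieldType) d q (f : cube d -> bool) :
  \sum_(xs : {ffun 'I_q -> cube d}) YY R f xs ^+ 2 * (#|cube d|%:R) ^+ 4
  <= ('C(q, 2))%:R * (('C(q, 2))%:R * ((#|cube d|%:R) ^+ q * (VV R f * VV R f))
     + ((#|cube d|%:R) ^+ q * VV R f * (#|cube d|%:R) ^+ 2) * (4 * q%:R)).
Proof.
set N : R := #|cube d|%:R.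
set A := N ^+ q * (VV R f * VV R f).
set B := N ^+ q * VV R f * N ^+ 2.
have B0 : 0 <= B by rewrite /B !mulr_ge0 ?exprn_ge0 ?VV_ge0 ?ler0n.
have -> : \sum_(xs : {ffun 'I_q -> cube d}) YY R f xs ^+ 2 * N ^+ 4
   = \sum_(P : 'I_q * 'I_q | (P.1 < P.2)%N) \sum_(P' : 'I_q * 'I_q | (P'.1 < P'.2)%N)
       \sum_(xs : {ffun 'I_q -> cube d}) zz R f P xs * zz R f P' xs * N ^+ 4.
  under eq_bigr => xs _ do rewrite expr2 /YY big_distrlr /= mulr_suml.
  rewrite exchange_big /=; apply: eq_bigr => P _.
  under eq_bigr => xs _ do rewrite mulr_suml.
  by rewrite exchange_big.
rewrite -sum_cond_const; apply: ler_sum => P HP.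
apply: (@le_trans _ _ (\sum_(P' : 'I_q * 'I_q | (P'.1 < P'.2)%N) (A + (ov P P')%:R * B))).
  by apply: ler_sum => P' HP'; apply: pair_bound.
rewrite big_split /= sum_cond_const lerD2l -mulr_suml mulrC ler_wpM2l //.
apply: (le_trans _ (ov_le R P)).
rewrite [X in _ <= X](bigID (fun P' : 'I_q * 'I_q => (P'.1 < P'.2)%N)) /= lerDl.
by apply: sumr_ge0 => P' _; rewrite ler0n.
Qed.

Lemma bin2R (R : nzRingType) q : (0 < q)%N -> ('C(q, 2))%:R * 2 = q%:R * (q%:R - 1) :> R.
Proof.
move=> q0; have H : ('C(q, 2) * 2 = q * q.-1)%N.
  by have := bin_ffact q 2; rewrite ffactnS ffactn1.
by rewrite -[2]/(2%:R) -natrM H natrM -subn1 natrB.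
Qed.



Unset Implicit Arguments.

Theorem lemmaB2 (R : realFieldType) (t d q : nat) (eps : R) (f : cube d -> bool) :
  (1 <= t)%N -> 0 < eps -> eps < 1 / 2 ->
  q%:R = 88 * t%:R / eps ->
  far_from_linear eps f ->
  prob_samples R
    (fun xs : {ffun 'I_q -> cube d} =>
       (violations f xs)%:R <= eps / 4 * ('C(q, 2))%:R)
  <= 1 / 4.
Proof.
move=> t1 e0 e2 hq hf.
set N : R := #|cube d|%:R.
have N0 : 0 < N by rewrite ltr0n card_cube expn_gt0.
set M : R := N ^+ q.
have M0 : 0 < M by rewrite exprn_gt0.
set V := VV R f.
set C : R := ('C(q, 2))%:R.
have hqe : q%:R * eps = 88 * t%:R by rewrite hq mulfVK ?gt_eqF.
have t1R : 1 <= (t%:R : R) by rewrite ler1n.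
have q0 : (0 < q)%N.
  rewrite lt0n; apply/eqP => q0; move: hqe; rewrite q0 mul0r => h; lra.
have hC : C * 2 = q%:R * (q%:R - 1) by exact: bin2R.
set p := V / N ^+ 2.
have hV : V = p * N ^+ 2 by rewrite /p divfK // expf_neq0 // gt_eqF.
have hp : eps <= p.
  have := BLR hf; rewrite -card_cube -/N -/(VV R f) -/V hV => h.
  rewrite -(ler_pM2r (exprn_gt0 2 N0)) expr2 mulrA; exact: h.
set S1 := \sum_(xs : {ffun 'I_q -> cube d}) YY R f xs.
set S2 := \sum_(xs : {ffun 'I_q -> cube d}) YY R f xs ^+ 2.
have hS1 : S1 = C * M * p.
  have N2 : N ^+ 2 != 0 by rewrite expf_neq0 // gt_eqF.
  apply: (mulIf N2).
  rewrite /S1 mulr_suml sumY -/N -/M -/C -/V hV; ring.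
have hS2 : S2 <= C * (C * M * p * p + 4 * q%:R * M * p).
  rewrite -(ler_pM2r (exprn_gt0 4 N0)).
  apply: (le_trans (_ : _ <= _) _); first by rewrite /S2 mulr_suml; exact: sumY2.
  rewrite -/N -/M -/C -/V hV le_eqVlt; apply/orP; left; apply/eqP; ring.
set thr := eps / 4 * C.
have C0 : 0 < C.
  have : 0 < q%:R * (q%:R - 1) :> R.
    have : (88 : R) <= q%:R * eps by rewrite hqe; lra.
    have : (q%:R : R) * eps <= q%:R * (1 / 2) by rewrite ler_pM2l ?ltr0n //; lra.
    move=> h1 h2; nra.
  rewrite -hC; nra.
have p0 : 0 < p by lra.
have hthr : thr <= C * p by rewrite /thr; nra.
pose Bc : R := \sum_(xs : {ffun 'I_q -> cube d}) (nat_of_bool (YY R f xs <= thr))%:R.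
have hprob : prob_samples R
    (fun xs : {ffun 'I_q -> cube d} => (violations f xs)%:R <= eps / 4 * C) = Bc / M.
  rewrite /prob_samples (@card_sumR R _ (fun xs : {ffun 'I_q -> cube d} =>
     (violations f xs)%:R <= eps / 4 * C)).
  rewrite card_ffun card_ord. have -> : ((#|cube d| ^ q)%N%:R : R) = M by rewrite /M /N natrX.
  rewrite /Bc; congr (_ / _); apply: eq_bigr => xs _.
  by rewrite viol_Y.
rewrite hprob.
have E : \sum_(xs : {ffun 'I_q -> cube d}) (YY R f xs - C * p) ^+ 2
    = S2 - 2 * (C * p) * S1 + (C * p) ^+ 2 * M.
  transitivity (\sum_(xs : {ffun 'I_q -> cube d})
     (YY R f xs ^+ 2 + ((- (2 * (C * p))) * YY R f xs + (C * p) ^+ 2))).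
    by apply: eq_bigr => xs _; ring.
  rewrite big_split big_split /= -mulr_sumr sumr_const card_ffun card_ord.
  rewrite -[(C * p) ^+ 2 *+ _]mulr_natr natrX -/N -/M -/S1 -/S2; ring.
have Ch : Bc * (C * p - thr) ^+ 2 <= S2 - 2 * (C * p) * S1 + (C * p) ^+ 2 * M.
  rewrite -E /Bc mulr_suml; apply: ler_sum => xs _.
  case: (boolP (YY R f xs <= thr)) => h /=.
    rewrite mul1r; nra.
  by rewrite mul0r sqr_ge0.
rewrite hS1 in Ch.
have Ch2 : Bc * (C * p - thr) ^+ 2 <= 4 * q%:R * C * M * p.
  apply: (le_trans Ch); nra.
have Bc0 : 0 <= Bc by apply: sumr_ge0 => xs _; rewrite ler0n.
have hK : C * (3 / 4) * p <= C * p - thr by rewrite /thr; nra.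
have hK2 : (C * (3 / 4) * p) ^+ 2 <= (C * p - thr) ^+ 2.
  rewrite ler_sqr ?nnegrE; nra.
have h1 : Bc * (C * (3 / 4) * p) ^+ 2 <= 4 * q%:R * C * M * p.
  apply: (le_trans _ Ch2); exact: ler_wpM2l.
have h2 : Bc * C * (9 / 16) * p <= 4 * q%:R * M.
  have cp : 0 < C * p by nra.
  rewrite -(ler_pM2r cp); lra.
have h3 : Bc * (q%:R - 1) * (9 / 16) * p <= 8 * M.
  have qp : (0 : R) < q%:R by rewrite ltr0n.
  have h2' : Bc * (q%:R * (q%:R - 1)) * (9 / 16) * p <= 8 * q%:R * M.
    rewrite -hC; lra.
  rewrite -(ler_pM2l qp); lra.
have q1 : (1 : R) <= q%:R by rewrite ler1n.
have h4 : 87 <= (q%:R - 1) * p.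
  have : (q%:R - 1) * eps <= (q%:R - 1) * p by rewrite ler_wpM2l // subr_ge0.
  nra.
have h5 : Bc * 87 <= Bc * ((q%:R - 1) * p) by rewrite ler_wpM2l.
rewrite ler_pdivrMr //; nra.
Qed.
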